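(* Assume conditions (A1)–(A6). Let $M<\infty$. Then for each $\eta\in\mathcal N_{\mathcal P}$, $\theta\in\mathcal H_{\mathcal P}$ and $\alpha\in\mathcal H$ with $\rho_{\mathcal H}(\alpha)<M$, $$\psi_0(\theta)-\psi_0(\theta_0)=\int\dot\ell_\eta(\theta)(\alpha)(z)\,P_0(dz)+\partial^2_\theta L_0(\theta_0,\eta_0)(\alpha_0-\alpha,\theta-\theta_0)+(I_{\mathrm{lin}}+I_{\mathrm{quad}})\,O(\|\theta-\theta_0\|_{\mathcal H}^2)+O(\|\eta-\eta_0\|_{\mathcal N}\|\theta-\theta_0\|_{\mathcal H})+O(\|\eta-\eta_0\|_{\mathcal N}^2),$$ where each $O(x)$ term is bounded in absolute value by $Kx$ for a constant $K$ depending only on $M$ and the constants appearing in the conditions.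
   Context: Setting: $Z\sim P_0$ on $\mathcal Z$, $P_0$ in a convex nonparametric model $\mathcal P$; $Pf:=\int f\,dP$. $(\mathcal H,\|\cdot\|_{\mathcal H})$, $(\mathcal N,\|\cdot\|_{\mathcal N})$ are normed linear spaces and $\rho_{\mathcal H}$ is an auxiliary norm on $\mathcal H$ with values in $[0,\infty]$. For $\eta\in\mathcal N$, $\ell_\eta:\mathcal Z\times\mathcal H\to\mathbb R$ is a loss and $L_P(\theta,\eta):=E_P[\ell_\eta(Z,\theta)]$. Each $P\in\mathcal P$ has nuisance $\eta_P\in\mathcal N$ and M-estimand $\theta_P:=\arg\min_{\theta\in\mathcal H}L_P(\theta,\eta_P)$. A known $m:\mathcal Z\times\mathcal H\to\mathbb R$ defines $\psi_P(\theta):=E_P[m(Z,\theta)]$ and $\Psi(P):=\psi_P(\theta_P)$. Subscript $0$ denotes evaluation at $P_0$. $\mathcal H_{\mathcal P}:=\mathrm{conv}\{\theta_P:P\in\mathcal P\}$, $\mathcal N_{\mathcal P}:=\mathrm{conv}\{\eta_P:P\in\mathcal P\}$. $\mathcal F^*$ is the dual of a normed space $\mathcal F$; $\overline{\mathcal H}$ is the completion of $\mathcal H$ under $\|\cdot\|_{\mathcal H}$. (A1) For all $P\in\mathcal P$, $\theta_P$ exists and is unique. (A2) $\psi_0:(\mathcal H,\|\cdot\|_{\mathcal H})\to\mathbb R$ is Fréchet differentiable at every $\theta\in\mathcal H_{\mathcal P}$ with derivative $\dot\psi_0(\theta)$, and $\theta\mapsto\dot\psi_0(\theta)$ is Lipschitz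 continuous. (A3) (i) For all $\theta\in\mathcal H_{\mathcal P}$, $\eta\in\mathcal N_{\mathcal P}$ there is a continuous linear $\dot\ell_\eta(\theta):(\mathcal H,\|\cdot\|_{\mathcal H})\to L^2(P_0)$ such that for every $P\in\mathcal P$, $L_P(\cdot,\eta)$ is Fréchet differentiable at $\theta$ with $\partial_\theta L_P(\theta,\eta)(h)=P\,\dot\ell_\eta(\theta)(h)$ for all $h\in\mathcal H$. (ii) For each $\eta\in\mathcal N_{\mathcal P}$, $\theta\mapsto\partial_\theta L_0(\theta,\eta)$ from $(\mathcal H,\|\cdot\|_{\mathcal H})$ into $(\mathcal H,\rho_{\mathcal H})^*$ is Fréchet differentiable at every $\theta\in\mathcal H_{\mathcal P}$ with symmetric derivative $\partial^2_\theta L_0(\theta,\eta)(\cdot,\cdot)$. (iii) There is $C<\infty$ with $|\partial^2_\theta L_0(\theta',\eta')(h_1,h_2)-\partial^2_\theta L_0(\theta,\eta)(h_1,h_2)|\le C(\|\theta'-\theta\|_{\mathcal H}+\|\eta'-\eta\|_{\mathcal N})$ for all $\theta,\theta'\in\mathcal H_{\mathcal P}$, $\eta,\eta'\in\mathcal N_{\mathcal P}$, $h_1,h_2\in\mathcal H$ with $\|h_1\|_{\mathcal H}+\rho_{\mathcal H}(h_2)\le1$. (A4) (i) $\eta\mapsto\partial_\theta L_0(\theta_0,\eta)$ from $(\mathcal N,\|\cdot\|_{\mathcal N})$ into $(\mathcal H,\rho_{\mathcal H})^*$ is Fréchet differentiable at every $\eta\in\mathcal N_{\mathcal P}$ with derivative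 $\partial_\eta\partial_\theta L_0(\theta_0,\eta)(g,h)$. (ii) There is $C<\infty$ with $|\partial_\eta\partial_\theta L_0(\theta_0,\eta)(g,h)-\partial_\eta\partial_\theta L_0(\theta_0,\eta_0)(g,h)|\le C\|\eta-\eta_0\|_{\mathcal N}$ for all $\eta\in\mathcal N_{\mathcal P}$, $h\in\mathcal H$, $g\in\mathcal N$ with $\|g\|_{\mathcal N}+\rho_{\mathcal H}(h)\le1$. (A5) $\partial_\eta\partial_\theta L_0(\theta_0,\eta_0)(g,h)=0$ for all $(g,h)\in\mathcal N\times\mathcal H$. (A6) There are $0<\kappa_1,\kappa_2<\infty$ with $\kappa_1\|h\|_{\mathcal H}^2\le\partial^2_\theta L_0(\theta_0,\eta_0)(h,h)\le\kappa_2\|h\|_{\mathcal H}^2$ for all $h\in\mathcal H$. Hessian Riesz representer: $\alpha_0\in\overline{\mathcal H}$ is the unique element with $\dot\psi_0(\theta_0)(h)=\partial^2_\theta L_0(\theta_0,\eta_0)(\alpha_0,h)$ for all $h\in\overline{\mathcal H}$ (forms extended by continuity). $I_{\mathrm{lin}}:=0$ if $\psi_0$ is linear with $\psi_0=\dot\psi_0(\theta_0)$, and $1$ otherwise; $I_{\mathrm{quad}}:=0$ if $L_0(\theta,\eta_0)-L_0(\theta_0,\eta_0)=\partial_\theta L_0(\theta_0,\eta_0)(\theta-\theta_0)+\tfrac12\partial^2_\theta L_0(\theta_0,\eta_0)(\theta-\theta_0,\theta-\theta_0)$ for all $\theta$, and $1$ otherwise. *)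

(* Defs.v *)
From HB Require Import structures.
From mathcomp Require Import all_boot all_order all_algebra.
From mathcomp Require Import all_classical all_reals all_analysis.
Set Implicit Arguments. Unset Strict Implicit. Unset Printing Implicit Defensive.
Import Order.TTheory GRing.Theory Num.Theory.
Import numFieldNormedType.Exports.
Local Open Scope classical_set_scope.
Local Open Scope ring_scope.

Section Defs.
Context {R : realType}.

Definition convhull (V : lmodType R) (A : set V) : set V :=
  [set x | exists n (w : 'I_n -> R) (a : 'I_n -> V),
     [/\ forall i, 0 <= w i, \sum_(i < n) w i = 1,
         forall i, A (a i) & x = \sum_(i < n) w i *: a i]].

Definition ext_norm (V : lmodType R) (rho : V -> \bar R) : Prop :=
  [/\ forall v, (0 <= rho v)%E,
      forall v, rho v = 0%E -> v = 0,
      forall (a : R) v, rho (a *: v) = (`|a|%:E * rho v)%E &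
      forall u v : V, (rho (u + v)%R <= rho u + rho v)%E].

Definition in_rho_dual (V : lmodType R) (rho : V -> \bar R) (f : V -> R) : Prop :=
  (forall (a : R) u v, f (a *: u + v) = a * f u + f v) /\
  exists c : R, forall v, (rho v <= 1)%E -> `|f v| <= c.

(* Frechet differentiability, relative to the set S (the domain of F),
   of F : U -> (V, rho)^* at x, with derivative D : U -> (V, rho)^*
   (a continuous linear map from (U, |.|) into (V, rho)^* with its dual norm). *)
Definition rel_frechet (U : normedModType R) (V : lmodType R)
  (rho : V -> \bar R) (S : set U) (F : U -> V -> R) (x : U) (D : U -> V -> R) : Prop :=
  [/\ forall (a : R) k1 k2 v, D (a *: k1 + k2) v = a * D k1 v + D k2 v,
      forall k, in_rho_dual rho (D k),
      exists c : R, forall k v, (rho v <= 1)%E -> `|D k v| <= c * `|k| &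
      forall e : R, 0 < e -> exists2 del : R, 0 < del &
        forall y, S y -> `|y - x| < del -> forall v, (rho v <= 1)%E ->
          `|F y v - F x v - D (y - x) v| <= e * `|y - x| ].

Definition ind01 (P : Prop) : R := if `[< P >] then 0 else 1.

End Defs.

(* Main.v *)
Require Import Defs.
From HB Require Import structures.
From mathcomp Require Import all_boot all_order all_algebra.
From mathcomp Require Import all_classical all_reals all_analysis.
From mathcomp Require Import ring lra.
Import Order.TTheory GRing.Theory Num.Theory.
Import numFieldNormedType.Exports.
Set Implicit Arguments. Unset Strict Implicit. Unset Printing Implicit Defensive.
Local Open Scope classical_set_scope.
Local Open Scope ring_scope.

Section H.
Context {R : realType}.
Lemma andP_intro {a b : bool} : a -> b -> a && b. Proof. by move=> -> ->. Qed.

Lemma loclip (f : R -> R) (A : R) :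
  (forall t, 0 <= t <= 1 -> forall e, 0 < e -> exists2 del, 0 < del &
     forall s, 0 <= s <= 1 -> `|s - t| < del -> `|f s - f t| <= (A + e) * `|s - t|) ->
  `|f 1 - f 0| <= A.
Proof.
move=> H; apply/ler_addgt0Pr => e e0.
set B := A + e.
pose S := [set t : R | 0 <= t <= 1 /\ forall s, 0 <= s <= t -> `|f s - f 0| <= B * s].
have S0 : S 0.
  split; first by rewrite lexx ler01.
  move=> s /andP[s0 s0']; have -> : s = 0 by apply/eqP; rewrite eq_le s0 s0'.
  by rewrite subrr normr0 mulr0.
have hs : has_sup S.
  split; first by exists 0.
  by exists 1 => x [/andP[_ ->]].
set T := sup S.
have T0 : 0 <= T := sup_upper_bound hs S0.
have T1 : T <= 1.
  by apply: ge_sup; [exists 0 | move=> x [/andP[_ ->]]].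
have [del del0 Hd] := H T (andP_intro T0 T1) e e0.
have below : forall s, 0 <= s -> s < T -> `|f s - f 0| <= B * s.
  move=> s s0 sT.
  have [x [_ Sx] lt] := @sup_adherent _ S (T - s) ltac:(by rewrite subr_gt0) hs.
  apply: Sx; rewrite s0 /=; rewrite -/T in lt; lra.
have atT : `|f T - f 0| <= B * T.
  have [x [/andP [x0 x1] Sx] lt] := sup_adherent del0 hs.
  have xT : x <= T := sup_upper_bound hs (conj (andP_intro x0 x1) Sx).
  rewrite -/T in lt.
  apply: le_trans (ler_distD (f x) _ _) _.
  have h1 : `|f T - f x| <= B * (T - x).
    rewrite distrC; have := Hd x (andP_intro x0 x1).
    have -> : `|x - T| = T - x by rewrite distrC ger0_norm ?subr_ge0.
    by apply; lra.
  have h2 : `|f x - f 0| <= B * x by apply: Sx; rewrite x0 lexx.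
  lra.
have T1' : T = 1.
  apply/eqP; rewrite eq_le T1 /=; rewrite leNgt; apply/negP => Tlt.
  pose t' := Num.min (T + del / 2) 1.
  have t'1 : t' <= 1 by rewrite /t' ge_min lexx orbT.
  have t'2 : t' <= T + del / 2 by rewrite /t' ge_min lexx.
  have t'3 : T < t' by rewrite /t' lt_min Tlt andbT; lra.
  have St' : S t'.
    split; first by rewrite t'1 andbT; lra.
    move=> s /andP[s0 st].
    have [sT|Ts] := ltP s T; first exact: below.
    have [->|sT'] := eqVneq s T; first exact: atT.
    have Ts' : T < s by rewrite lt_neqAle eq_sym sT' Ts.
    apply: le_trans (ler_distD (f T) _ _) _.
    have h1 : `|f s - f T| <= B * (s - T).
      have := Hd s (andP_intro s0 (le_trans st t'1)).
      have -> : `|s - T| = s - T by rewrite ger0_norm ?subr_ge0.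
      by apply; lra.
    lra.
  have := sup_upper_bound hs St'; rewrite -/T; lra.
by move: atT; rewrite T1' mulr1.
Qed.

Lemma mvt_bound (f g : R -> R) (A : R) :
  (forall t, 0 <= t <= 1 -> forall e, 0 < e -> exists2 del, 0 < del &
     forall s, 0 <= s <= 1 -> `|s - t| < del -> `|f s - f t - g t * (s - t)| <= e * `|s - t|) ->
  (forall t, 0 <= t <= 1 -> `|g t| <= A) -> `|f 1 - f 0| <= A.
Proof.
move=> H HA; apply: loclip => t ht e e0.
have [del d0 Hd] := H t ht e e0; exists del => // s hs hst.
have := Hd s hs hst; have := HA t ht => h1 h2.
have : `|f s - f t| <= `|f s - f t - g t * (s - t)| + `|g t * (s - t)|.
  by apply: le_trans (ler_normD _ _); rewrite subrK.
rewrite normrM => h3.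
have : `|g t| * `|s - t| <= A * `|s - t| by rewrite ler_wpM2r.
lra.
Qed.

Definition frech_dir (U : normedModType R) (S : set U) (F : U -> R) (x : U) (D : U -> R) :=
  (forall (a : R) k, D (a *: k) = a * D k) /\
  forall e : R, 0 < e -> exists2 del : R, 0 < del &
    forall y, S y -> `|y - x| < del -> `|F y - F x - D (y - x)| <= e * `|y - x|.

Lemma frech_dir_sub (U : normedModType R) (S : set U) F1 F2 x D1 D2 :
  frech_dir S F1 x D1 -> frech_dir S F2 x D2 ->
  frech_dir S (fun y => F1 y - F2 y) x (fun k => D1 k - D2 k).
Proof.
move=> [l1 H1] [l2 H2]; split=> [a k|e e0]; first by rewrite l1 l2 mulrBr.
have e2 : 0 < e / 2 by rewrite divr_gt0.
have [d1 d10 Hd1] := H1 _ e2; have [d2 d20 Hd2] := H2 _ e2.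
exists (Num.min d1 d2); first by rewrite lt_min d10 d20.
move=> y Sy; rewrite lt_min => /andP[y1 y2].
have := Hd1 y Sy y1; have := Hd2 y Sy y2 => h2 h1.
set a := F1 y - F1 x - D1 (y - x) in h1; set b := F2 y - F2 x - D2 (y - x) in h2.
have -> : F1 y - F2 y - (F1 x - F2 x) - (D1 (y - x) - D2 (y - x)) = a - b.
  by rewrite /a /b; ring.
apply: le_trans (ler_normB _ _) _; lra.
Qed.

Lemma lin_zero (V : lmodType R) (f : V -> R) :
  (forall (a : R) u v, f (a *: u + v) = a * f u + f v) -> f 0 = 0.
Proof.
move=> H; have := H 1 0 0; rewrite scale1r addr0 mul1r => E; lra.
Qed.

Lemma lin_scale (V : lmodType R) (f : V -> R) :
  (forall (a : R) u v, f (a *: u + v) = a * f u + f v) -> forall (a : R) u, f (a *: u) = a * f u.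
Proof. by move=> H a u; have := H a u 0; rewrite addr0 lin_zero // addr0. Qed.

Lemma rf_fd (U : normedModType R) (V : lmodType R) (rho : V -> \bar R) (S : set U) (F : U -> V -> R) x D v :
  rel_frechet rho S F x D -> (rho v <= 1)%E ->
  @frech_dir U S (fun y => F y v) x (fun k => D k v).
Proof.
move=> [l _ _ H] rv; split=> [a k|e e0].
  have := lin_scale (f := fun k => D k v); apply => a' u w; exact: l.
have [del d0 Hd] := H e e0; exists del => // y Sy yx; exact: Hd.
Qed.

Lemma isdiff_fd (U : normedModType R) (S : set U) (f : U -> R) x df :
  is_diff x f df -> frech_dir S f x df.
Proof.
move=> [dif <-]; split=> [a k|e e0]; first by rewrite linearZ.
have /eqaddoP := diff_locally dif.
move=> /(_ e e0) /nbhs_norm0P [del d0 Hd]; exists del => // y _ yx.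
have := Hd (y - x) yx; rewrite !fctE /= subrK.
by rewrite opprD addrA.
Qed.

Lemma seg_bound (U : normedModType R) (S : set U) (F : U -> R) (D : U -> U -> R) x0 h c A :
  (forall t, 0 <= t <= 1 -> S (x0 + t *: h)) ->
  (forall t, 0 <= t <= 1 -> frech_dir S F (x0 + t *: h) (D (x0 + t *: h))) ->
  (forall t, 0 <= t <= 1 -> `|D (x0 + t *: h) h - c| <= A) ->
  `|F (x0 + h) - F x0 - c| <= A.
Proof.
move=> HS HF HA.
have := @mvt_bound (fun t => F (x0 + t *: h) - t * c) (fun t => D (x0 + t *: h) h - c) A.
rewrite /= scale1r scale0r addr0 mul1r mul0r subr0.
have -> : F (x0 + h) - c - F x0 = F (x0 + h) - F x0 - c by ring.
apply=> // t ht e e0.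
have [lin Hf] := HF t ht.
have h1 : 0 < `|h| + 1 by rewrite ltr_wpDl.
have e' : 0 < e / (`|h| + 1) by rewrite divr_gt0.
have [del d0 Hd] := Hf _ e'.
exists (del / (`|h| + 1)); first by rewrite divr_gt0.
move=> s hs hst.
have dif : (x0 + s *: h) - (x0 + t *: h) = (s - t) *: h.
  by rewrite scalerBl opprD addrACA subrr add0r.
have := Hd _ (HS s hs).
rewrite dif normrZ lin.
have hlt : `|s - t| * `|h| < del.
  move: hst; rewrite ltr_pdivlMr // => hst.
  apply: le_lt_trans hst; rewrite ler_wpM2l //; lra.
move=> /(_ hlt) H.
have -> : F (x0 + s *: h) - s * c - (F (x0 + t *: h) - t * c) - (D (x0 + t *: h) h - c) * (s - t)
   = F (x0 + s *: h) - F (x0 + t *: h) - (s - t) * D (x0 + t *: h) h by ring.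
apply: le_trans H _.
have -> : e / (`|h| + 1) * (`|s - t| * `|h|) = (e * `|s - t|) * (`|h| / (`|h| + 1)) by ring.
apply: ler_piMr; first by rewrite mulr_ge0 // ltW.
rewrite ler_pdivrMr // mul1r; lra.
Qed.

Lemma scale_bound (U : normedModType R) (G : U -> R) c :
  (forall (a : R) k, G (a *: k) = a * G k) ->
  (forall u, `|u| <= 2^-1 -> `|G u| <= c) -> forall h, `|G h| <= 2 * c * `|h|.
Proof.
move=> lin Hb h.
have c0 : 0 <= c by apply: le_trans (Hb 0 _); rewrite ?normr0 ?invr_ge0 ?ler0n.
have [->|hn] := eqVneq h 0.
  have G0 : G 0 = 0 by rewrite -[X in G X](scale0r (0 : U)) lin mul0r.
  by rewrite G0 !normr0 mulr0.
have hp : 0 < `|h| by rewrite normr_gt0.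
set u := (2 * `|h|)^-1 *: h.
have hu : h = (2 * `|h|) *: u by rewrite /u scalerA divff ?scale1r // mulf_neq0 // ?pnatr_eq0 // normr_eq0.
have nu : `|u| = 2^-1.
  rewrite /u normrZ normrV ?unitfE ?mulf_neq0 ?pnatr_eq0 ?normr_eq0 //.
  rewrite normrM normr_nat normr_id invfM -mulrA mulVf ?mulr1 // normr_eq0 //.
rewrite {1}hu lin normrM.
have Hu := Hb u ltac:(by rewrite nu).
rewrite [`|2 * `|h| |]ger0_norm ?mulr_ge0 //.
have : 2 * `|h| * `|G u| <= 2 * `|h| * c by rewrite ler_wpM2l // mulr_ge0.
by move=> HH; apply: (le_trans HH); rewrite -mulrA [`|h| * c]mulrC mulrA.
Qed.

Lemma split_l (m n : nat) (j : 'I_m) : fintype.split (lshift n j) = inl j.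
Proof. exact: (unsplitK (inl j : 'I_m + 'I_n)). Qed.
Lemma split_r (m n : nat) (j : 'I_n) : fintype.split (rshift m j) = inr j.
Proof. exact: (unsplitK (inr j : 'I_m + 'I_n)). Qed.

Lemma convhull_pt (V : lmodType R) (A : set V) a : A a -> convhull A a.
Proof.
move=> Aa; exists 1%N, (fun _ => 1), (fun _ => a).
split; [by move=> i; rewrite ler01 | by rewrite big_ord1 | by [] | by rewrite big_ord1 scale1r].
Qed.

Lemma convhull_seg (V : lmodType R) (A : set V) x y t :
  convhull A x -> convhull A y -> 0 <= t <= 1 -> convhull A (x + t *: (y - x)).
Proof.
move=> [n [w [a [w0 w1 Aa ->]]]] [m [v [b [v0 v1 Ab ->]]]] /andP[t0 t1].
exists (n + m)%N,
  (fun i => match fintype.split i with inl j => (1 - t) * w j | inr j => t * v j end),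
  (fun i => match fintype.split i with inl j => a j | inr j => b j end); split.
- move=> i; case: fintype.split => j; apply: mulr_ge0 => //; lra.
- rewrite big_split_ord /=.
  under eq_bigr do rewrite split_l.
  under [X in _ + X = _]eq_bigr do rewrite split_r.
  by rewrite -!mulr_sumr w1 v1 !mulr1 subrK.
- by move=> i; case: fintype.split.
- rewrite big_split_ord /=; symmetry.
  rewrite (eq_bigr (fun j : 'I_n => ((1 - t) * w j) *: a j)); last by move=> j _; rewrite split_l.
  rewrite (eq_bigr (fun j : 'I_m => (t * v j) *: b j)); last by move=> j _; rewrite split_r.
  under eq_bigr do rewrite -scalerA.
  under [X in _ + X = _]eq_bigr do rewrite -scalerA.
  rewrite -!scaler_sumr scalerBl scale1r scalerBr.
  by rewrite addrCA [in RHS]addrC -!addrA; congr (_ + _); rewrite addrC.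
Qed.

Lemma zero_of_small (X c : R) : 0 < c -> (forall e, 0 < e -> `|X| <= e * c) -> X = 0.
Proof.
move=> c0 H; apply/eqP; apply/negPn/negP => X0.
have Xp : 0 < `|X| by rewrite normr_gt0.
have := H (`|X| / (2 * c)) ltac:(by rewrite divr_gt0 // mulr_gt0).
rewrite -mulrA invfM -mulrA mulVf ?gt_eqF // mulr1.
move=> h; have : `|X| <= `|X| / 2 by [].
rewrite ler_pdivlMr //; lra.
Qed.

Lemma foc (U : normedModType R) (Lf : U -> R) (x : U) (D : U -> R) :
  frech_dir setT Lf x D -> (forall y, Lf x <= Lf y) -> forall v, D v = 0.
Proof.
move=> [lin H] Hmin v; apply/eqP; apply/negPn/negP => d0.
set d := D v in d0.
have a0 : 0 < `|d| by rewrite normr_gt0.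
have b0 : 0 <= `|v| by [].
set e := `|d| / (2 * (`|v| + 1)).
have e0 : 0 < e by rewrite divr_gt0 // mulr_gt0 // ltr_wpDl.
have [del del0 Hd] := H e e0.
set s := del / (2 * (`|d| * `|v| + 1)).
have s0 : 0 < s by rewrite divr_gt0 // mulr_gt0 // ltr_wpDl // mulr_ge0.
set r := - (s * d).
have nr : `|r| = s * `|d| by rewrite normrN normrM gtr0_norm.
have yx : `|(x + r *: v) - x| = s * `|d| * `|v| by rewrite addrC addKr normrZ nr.
have lt1 : s * `|d| * `|v| < del.
  have q0 : 0 <= `|d| * `|v| by rewrite mulr_ge0.
  have -> : s * `|d| * `|v| = del * ((`|d| * `|v|) / (2 * (`|d| * `|v| + 1))).
    by rewrite /s; ring.
  rewrite -[X in _ < X]mulr1 ltr_pM2l // ltr_pdivrMr ?mulr_gt0 ?ltr_wpDl //; lra.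
have := Hd (x + r *: v) I; rewrite yx => /(_ lt1).
have -> : x + r *: v - x = r *: v by rewrite addrC addKr.
rewrite lin /r.
have dd : d * d = `|d| * `|d| by rewrite -normrM ger0_norm // -expr2 sqr_ge0.
set A := `|d|.
have key : e * (s * A * `|v|) <= s * A * A / 2.
  rewrite /e /A.
  have -> : `|d| / (2 * (`|v| + 1)) * (s * `|d| * `|v|) = (s * `|d| * `|d| / 2) * (`|v| / (`|v| + 1)).
    rewrite invfM; ring.
  apply: ler_piMr; first by rewrite !mulr_ge0 ?invr_ge0 // ltW.
  rewrite ler_pdivrMr ?ltr_wpDl //; lra.
have m := Hmin (x + - (s * d) *: v).
move=> h.
have h' : Lf (x + - (s * d) *: v) - Lf x - - (s * d) * d <= s * A * A / 2.
  by apply: le_trans (ler_norm _) (le_trans h key).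
have : - (s * d) * d = - (s * (A * A)) by rewrite -dd mulNr mulrA.
have sAA : 0 < s * (A * A) by rewrite mulr_gt0 // mulr_gt0.
move=> E; rewrite E in h'.
have : s * A * A / 2 = s * (A * A) / 2 by rewrite mulrA.
move=> E2; rewrite E2 in h'; lra.
Qed.

Lemma ereal_half (x : \bar R) (a : R) :
  (0 <= x)%E -> (x <= (2^-1)%:E)%E -> a <= 2^-1 -> (a%:E + x <= 1)%E.
Proof.
case: x => [r| |] //= _; rewrite ?lee_fin // => r2 a2.
lra.
Qed.

Lemma ereal_half1 (x : \bar R) : (0 <= x)%E -> (x <= (2^-1)%:E)%E -> (x <= 1)%E.
Proof.
move=> x0 x2; apply: le_trans x2 _; rewrite lee_fin; lra.
Qed.

Lemma quad_deriv (U : normedModType R) (Lf : U -> R) (x0 x : U) (D0 : U -> R)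
    (B : U -> U -> R) (Dx : U -> R) :
  (forall (a : R) u v, D0 (a *: u + v) = a * D0 u + D0 v) ->
  (forall (a : R) u v w, B (a *: u + v) w = a * B u w + B v w) ->
  (forall u w, B u w = B w u) ->
  (forall y, Lf y - Lf x0 = D0 (y - x0) + 2^-1 * B (y - x0) (y - x0)) ->
  frech_dir setT Lf x Dx ->
  forall v, Dx v = D0 v + B (x - x0) v.
Proof.
move=> lD lB sB Q [lx H] v.
set h := x - x0.
have expand : forall t, Lf (x + t *: v) - Lf x = t * D0 v + t * B h v + t * t * 2^-1 * B v v.
  move=> t.
  have -> : Lf (x + t *: v) - Lf x = (Lf (x + t *: v) - Lf x0) - (Lf x - Lf x0) by ring.
  rewrite !Q -/h.
  have -> : x + t *: v - x0 = t *: v + h by rewrite /h addrAC addrC addrA.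
  have e1 : B (t *: v + h) (t *: v + h) = t * (t * B v v + B h v) + (t * B h v + B h h).
    by rewrite lB (sB v (t *: v + h)) lB (sB h (t *: v + h)) lB (sB v h).
  rewrite e1 lD. rewrite !mulrDr !mulrA. lra.
suff : Dx v - D0 v - B h v = 0 by move=> E; lra.
apply: (@zero_of_small _ (`|v| + 1)); first by rewrite ltr_wpDl.
move=> e e0.
have [del d0 Hd] := H e e0.
have v1 : 0 < `|v| + 1 by rewrite ltr_wpDl.
have b1 : 0 < `|B v v| + 1 by rewrite ltr_wpDl.
set tt := Num.min (del / (2 * (`|v| + 1))) (e / (`|B v v| + 1)).
have t0 : 0 < tt by rewrite /tt lt_min !divr_gt0 ?mulr_gt0.
have t1 : tt <= del / (2 * (`|v| + 1)) by rewrite /tt ge_min lexx.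
have t2 : tt <= e / (`|B v v| + 1) by rewrite /tt ge_min lexx orbT.
have tB : tt * `|B v v| <= e.
  apply: le_trans (_ : e / (`|B v v| + 1) * (`|B v v| + 1) <= e).
    apply: le_trans (_ : tt * (`|B v v| + 1) <= _); first by rewrite ler_wpM2l ?ltW //; lra.
    by rewrite ler_wpM2r // ltW.
  by rewrite mulfVK ?gt_eqF.
have tv : tt * `|v| < del.
  apply: le_lt_trans (_ : del / (2 * (`|v| + 1)) * (`|v| + 1) < del).
    apply: le_trans (_ : tt * (`|v| + 1) <= _); first by rewrite ler_wpM2l ?ltW //; lra.
    by rewrite ler_wpM2r // ltW.
  rewrite invfM mulrA mulfVK ?gt_eqF //.
  rewrite ltr_pdivrMr //; lra.
have := Hd (x + tt *: v) I.
have -> : x + tt *: v - x = tt *: v by rewrite addrC addKr.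
rewrite normrZ gtr0_norm // => /(_ tv).
rewrite lx.
set X := Dx v - D0 v - B h v.
have -> : Lf (x + tt *: v) - Lf x - tt * Dx v = - (tt * X) + tt * tt * 2^-1 * B v v.
  by rewrite expand /X; ring.
move=> HH.
have : `|tt * X| <= e * (tt * `|v|) + tt * tt * 2^-1 * `|B v v|.
  have -> : tt * X = - (- (tt * X) + tt * tt * 2^-1 * B v v) + tt * tt * 2^-1 * B v v by ring.
  apply: le_trans (ler_normD _ _) _; rewrite normrN; apply: lerD => //.
  rewrite normrM ger0_norm // mulr_ge0 // ?invr_ge0 // mulr_ge0 // ltW //.
rewrite normrM gtr0_norm //.
have -> : e * (tt * `|v|) + tt * tt * 2^-1 * `|B v v| = tt * (e * `|v| + 2^-1 * (tt * `|B v v|)) by ring.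
rewrite ler_pM2l // => HX.
apply: le_trans HX _.
have : 2^-1 * (tt * `|B v v|) <= 2^-1 * e by rewrite ler_wpM2l // invr_ge0.
move=> HH3; rewrite mulrDr mulr1; lra.
Qed.

Lemma segnorm (U : normedModType R) (x h : U) (t : R) : 0 <= t -> `|x + t *: h - x| = t * `|h|.
Proof. by move=> t0; rewrite addrC addKr normrZ ger0_norm. Qed.

Lemma bnd2 (c t x : R) : 0 <= t <= 1 -> 0 <= x -> c * (t * x) <= `|c| * x.
Proof.
move=> /andP[t0 t1] x0; apply: le_trans (_ : `|c| * (t * x) <= _).
  by rewrite ler_wpM2r ?mulr_ge0 // real_ler_norm // num_real.
by rewrite ler_wpM2l // ler_piMl.
Qed.

Lemma bnd3 (c t x y : R) : 0 <= t <= 1 -> 0 <= x -> 0 <= y -> c * (t * x) * y <= `|c| * x * y.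
Proof. by move=> ht x0 y0; rewrite ler_wpM2r // bnd2. Qed.

Lemma final_b (E1 W a b c M x y I : R) :
  0 < M -> 0 <= x -> 0 <= y -> 1 <= I -> 0 <= a -> 0 <= b -> 0 <= c ->
  `|E1| <= a * x * x ->
  `|W| <= 2 * (b * x) * x + 2 * (b * y) * x + 2 * (c * y) * y ->
  `|E1 + 2 * M * W| <= I * (a + 4 * M * (b + c)) * x ^+ 2
     + (a + 4 * M * (b + c)) * y * x + (a + 4 * M * (b + c)) * y ^+ 2.
Proof.
move=> M0 x0 y0 I1 a0 b0 c0 h1 h2.
have h3 : `|E1 + 2 * M * W| <= `|E1| + 2 * M * `|W|.
  by apply: le_trans (ler_normD _ _) _; rewrite normrM gtr0_norm ?mulr_gt0.
have h4 : 2 * M * `|W| <= 2 * M * (2 * (b * x) * x + 2 * (b * y) * x + 2 * (c * y) * y).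
  by rewrite ler_wpM2l // mulr_ge0 // ltW.
have f1 : 0 <= (I - 1) * ((a + 4 * M * (b + c)) * x ^+ 2).
  rewrite mulr_ge0 //; first lra.
  by rewrite mulr_ge0 ?sqr_ge0 // addr_ge0 // !mulr_ge0 ?addr_ge0 // ltW.
have f2 : 0 <= a * y * x by rewrite !mulr_ge0.
have f3 : 0 <= a * y * y by rewrite !mulr_ge0.
have f4 : 0 <= M * c * (x * x) by rewrite !mulr_ge0 // ltW.
have f5 : 0 <= M * b * (y * y) by rewrite !mulr_ge0 // ltW.
have f6 : 0 <= M * c * (y * x) by rewrite !mulr_ge0 // ltW.
have f7 : 0 <= M * b * (y * x) by rewrite !mulr_ge0 // ltW.
rewrite !expr2 in f1 *.
lra.
Qed.

Lemma final_a (W b c M x y I a : R) :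
  0 < M -> 0 <= x -> 0 <= y -> 0 <= I -> 0 <= a -> 0 <= b -> 0 <= c ->
  `|W| <= 2 * (b * y) * x + 2 * (c * y) * y ->
  `|0 + 2 * M * W| <= I * (a + 4 * M * (b + c)) * x ^+ 2
     + (a + 4 * M * (b + c)) * y * x + (a + 4 * M * (b + c)) * y ^+ 2.
Proof.
move=> M0 x0 y0 I0 a0 b0 c0 h2.
rewrite add0r normrM gtr0_norm ?mulr_gt0 //.
have h4 : 2 * M * `|W| <= 2 * M * (2 * (b * y) * x + 2 * (c * y) * y).
  by rewrite ler_wpM2l // mulr_ge0 // ltW.
have f1 : 0 <= I * ((a + 4 * M * (b + c)) * x ^+ 2).
  by rewrite mulr_ge0 // mulr_ge0 ?sqr_ge0 // addr_ge0 // !mulr_ge0 ?addr_ge0 // ltW.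
have f2 : 0 <= a * y * x by rewrite !mulr_ge0.
have f3 : 0 <= a * y * y by rewrite !mulr_ge0.
have f5 : 0 <= M * b * (y * y) by rewrite !mulr_ge0 // ltW.
have f6 : 0 <= M * c * (y * x) by rewrite !mulr_ge0 // ltW.
rewrite !expr2 in f1 *.
lra.
Qed.
End H.

Theorem theorem1 (R : realType) :
  exists Kf : R -> R -> R -> R -> R -> R -> R,
  forall (d : measure_display) (Z : measurableType d)
    (H N : normedModType R) (Hbar : completeNormedModType R) (iota : H -> Hbar)
    (rho : H -> \bar R)
    (Pm : set (probability Z R)) (P0 : probability Z R)
    (ell : N -> Z -> H -> R) (etaP : probability Z R -> N)
    (thetaP : probability Z R -> H) (m : Z -> H -> R)
    (dpsi : H -> H -> R) (ldot : N -> H -> H -> Z -> R)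
    (d2L : H -> N -> H -> H -> R) (dEta : N -> N -> H -> R)
    (Bbar : Hbar -> Hbar -> R) (dpsibar : Hbar -> R) (alpha0 : Hbar)
    (Lpsi C3 C4 kappa1 kappa2 : R),
  let L := fun (P : probability Z R) (th : H) (et : N) =>
             Rintegral P setT (fun z => ell et z th) in
  let psi0 := fun th : H => Rintegral P0 setT (fun z => m z th) in
  let dL := fun (th : H) (et : N) (h : H) => Rintegral P0 setT (ldot et th h) in
  let HP := convhull (thetaP @` Pm) in
  let NP := convhull (etaP @` Pm) in
  let theta0 := thetaP P0 in
  let eta0 := etaP P0 in
  (* setting: convex model containing P0, auxiliary norm, completion of H *)
  (forall P Q, Pm P -> Pm Q -> forall t : R, 0 <= t <= 1 ->
     exists2 S, Pm S & forall A, measurable A ->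
       S A = (t%:E * P A + (1 - t)%:E * Q A)%E) ->
  Pm P0 ->
  ext_norm rho ->
  (forall (a : R) u v, iota (a *: u + v) = a *: iota u + iota v) ->
  (forall h, `|iota h| = `|h|) ->
  closure (range iota) = setT ->
  (* (A1) + definition of theta_P *)
  (forall P, Pm P -> forall th, th <> thetaP P -> L P (thetaP P) (etaP P) < L P th (etaP P)) ->
  (* (A2) *)
  (forall th, HP th -> is_diff th psi0 (dpsi th)) ->
  (forall th th', HP th -> HP th' -> forall h,
     `|dpsi th' h - dpsi th h| <= Lpsi * `|th' - th| * `|h|) ->
  (* (A3)(i) *)
  (forall th et, HP th -> NP et ->
     [/\ forall h, measurable_fun setT (ldot et th h) /\
                   P0.-integrable setT (fun z => (ldot et th h z ^+ 2)%:E),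
         forall (a : R) h1 h2, {ae P0, forall z,
           ldot et th (a *: h1 + h2) z = a * ldot et th h1 z + ldot et th h2 z},
         exists c : R, forall h,
           Num.sqrt (Rintegral P0 setT (fun z => ldot et th h z ^+ 2)) <= c * `|h| &
         forall P, Pm P ->
           is_diff th (fun t => L P t et) (fun h => Rintegral P setT (ldot et th h))]) ->
  (* (A3)(ii) *)
  (forall et th, NP et -> HP th ->
     [/\ in_rho_dual rho (dL th et),
         rel_frechet rho HP (fun t => dL t et) th (d2L th et) &
         forall h1 h2, d2L th et h1 h2 = d2L th et h2 h1]) ->
  (* (A3)(iii) *)
  (forall th th' et et' h1 h2, HP th -> HP th' -> NP et -> NP et' ->
     (`|h1|%:E + rho h2 <= 1)%E ->
     `|d2L th' et' h1 h2 - d2L th et h1 h2| <= C3 * (`|th' - th| + `|et' - et|)) ->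
  (* (A4)(i) *)
  (forall et, NP et -> rel_frechet rho NP (fun e => dL theta0 e) et (dEta et)) ->
  (* (A4)(ii) *)
  (forall et g h, NP et -> (`|g|%:E + rho h <= 1)%E ->
     `|dEta et g h - dEta eta0 g h| <= C4 * `|et - eta0|) ->
  (* (A5) *)
  (forall g h, dEta eta0 g h = 0) ->
  (* (A6) *)
  0 < kappa1 -> 0 < kappa2 ->
  (forall h, kappa1 * `|h| ^+ 2 <= d2L theta0 eta0 h h <= kappa2 * `|h| ^+ 2) ->
  (* continuous extensions to the completion, and the Hessian Riesz representer *)
  (forall (a : R) x y z, Bbar (a *: x + y) z = a * Bbar x z + Bbar y z) ->
  (forall (a : R) x y z, Bbar z (a *: x + y) = a * Bbar z x + Bbar z y) ->
  (exists c : R, forall x y, `|Bbar x y| <= c * `|x| * `|y|) ->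
  (forall h1 h2, Bbar (iota h1) (iota h2) = d2L theta0 eta0 h1 h2) ->
  (forall (a : R) x y, dpsibar (a *: x + y) = a * dpsibar x + dpsibar y) ->
  (exists c : R, forall x, `|dpsibar x| <= c * `|x|) ->
  (forall h, dpsibar (iota h) = dpsi theta0 h) ->
  (forall x, dpsibar x = Bbar alpha0 x) ->
  (* conclusion *)
  let Ilin := ind01 (forall th, psi0 th = dpsi theta0 th) in
  let Iquad := ind01 (forall th, L P0 th eta0 - L P0 theta0 eta0 =
                  dL theta0 eta0 (th - theta0)
                  + 2^-1 * d2L theta0 eta0 (th - theta0) (th - theta0)) in
  forall M : R, let K := Kf M Lpsi C3 C4 kappa1 kappa2 in
  forall et th alpha, NP et -> HP th -> (rho alpha < M%:E)%E ->
    `|psi0 th - psi0 theta0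
      - (Rintegral P0 setT (ldot et th alpha)
         + Bbar (alpha0 - iota alpha) (iota (th - theta0)))|
    <= (Ilin + Iquad) * K * `|th - theta0| ^+ 2
       + K * `|et - eta0| * `|th - theta0|
       + K * `|et - eta0| ^+ 2.
Proof.
exists (fun M Lpsi C3 C4 _ _ => `|Lpsi| + 4 * `|M| * (`|C3| + `|C4|)).
move=> d Z H N Hbar iota rho Pm P0 ell etaP thetaP m dpsi ldot d2L dEta Bbar dpsibar alpha0
  Lpsi C3 C4 kappa1 kappa2 L psi0 dL HP NP theta0 eta0 _ HPm0 Hrho _ _ _ HA1 HA2a HA2b HA3i
  HA3ii HA3iii HA4i HA4ii HA5 _ _ _ HB1 _ _ HBi _ _ Hdp3 Hrep Ilin Iquad M K et th alpha
  Net Hth Hra.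
have HP0 : HP theta0 by apply: convhull_pt; exists P0.
have NP0 : NP eta0 by apply: convhull_pt; exists P0.
have [rho0 _ rhoZ _] := Hrho.
have Mpos : 0 < M.
  by have := le_lt_trans (rho0 alpha) Hra; rewrite lte_fin.
set h := th - theta0.
set k := et - eta0.
have thE : theta0 + h = th by rewrite /h addrC subrK.
have etE : eta0 + k = et by rewrite /k addrC subrK.
have segH : forall t, 0 <= t <= 1 -> HP (theta0 + t *: h).
  by move=> t ht; apply: convhull_seg.
have segN : forall t, 0 <= t <= 1 -> NP (eta0 + t *: k).
  by move=> t ht; apply: convhull_seg.
have t0of : forall t : R, 0 <= t <= 1 -> 0 <= t by move=> t /andP[].
have d2L_l1 : forall th et, HP th -> NP et -> forall (a : R) u v,
    d2L th et (a *: u) v = a * d2L th et u v.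
  move=> t e Ht Ne a u v; have [_ [l _ _ _] _] := HA3ii e t Ne Ht.
  exact: (@lin_scale _ _ (fun u => d2L t e u v) (fun a u w => l a u w v) a u).
have d2L_f1 : forall th et, HP th -> NP et -> forall (a : R) u w v,
    d2L th et (a *: u + w) v = a * d2L th et u v + d2L th et w v.
  by move=> t e Ht Ne; have [_ [l _ _ _] _] := HA3ii e t Ne Ht.
have d2L_l2 : forall th et, HP th -> NP et -> forall (a : R) u v w,
    d2L th et u (a *: v + w) = a * d2L th et u v + d2L th et u w.
  move=> t e Ht Ne a u; have [_ [_ Hd _ _] _] := HA3ii e t Ne Ht.
  exact: (Hd u).1.
have dL_l : forall th et, HP th -> NP et -> forall (a : R) u v,
    dL th et (a *: u + v) = a * dL th et u + dL th et v.
  by move=> t e Ht Ne; have [[l _] _ _] := HA3ii e t Ne Ht.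
have dEta_l : forall et, NP et -> forall (a : R) g v, dEta et (a *: g) v = a * dEta et g v.
  move=> e Ne a g v; have [l _ _ _] := HA4i e Ne.
  exact: (@lin_scale _ _ (fun u => dEta e u v) (fun a u w => l a u w v) a g).
have d2L_sym : forall u v, d2L theta0 eta0 u v = d2L theta0 eta0 v u.
  by have [_ _ s] := HA3ii eta0 theta0 NP0 HP0.
have foc0 : forall v, dL theta0 eta0 v = 0.
  have [_ _ _ Hd] := HA3i theta0 eta0 HP0 NP0.
  have fd := @isdiff_fd _ _ setT _ _ _ (Hd P0 HPm0).
  move=> v; apply: (foc fd) => y.
  have [->|ne] := eqVneq y theta0; first exact: lexx.
  exact: ltW (HA1 P0 HPm0 y (elimN eqP ne)).
set a' := (2 * M)^-1 *: alpha.
have M2 : 0 < 2 * M by rewrite mulr_gt0.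
have ra' : (rho a' <= (2^-1)%:E)%E.
  rewrite /a' rhoZ; move: Hra (rho0 alpha); case: (rho alpha) => [r| |] //= Hr _.
  rewrite -EFinM lee_fin gtr0_norm ?invr_gt0 //.
  rewrite mulrC ler_pdivrMr //; rewrite lte_fin in Hr.
  by rewrite mulrA mulVf ?pnatr_eq0 // mul1r ltW.
have ra0 : (0 <= rho a')%E := rho0 a'.
have ra1 : (rho a' <= 1)%E := ereal_half1 ra0 ra'.
have hb : forall u : H, `|u| <= 2^-1 -> (`|u|%:E + rho a' <= 1)%E.
  by move=> u hu; apply: ereal_half.
have hbN : forall u : N, `|u| <= 2^-1 -> (`|u|%:E + rho a' <= 1)%E.
  by move=> u hu; apply: ereal_half.
have aE : alpha = (2 * M) *: a' by rewrite /a' scalerA divff ?scale1r // gt_eqF.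
have R1 : `|psi0 th - psi0 theta0 - dpsi theta0 h| <= `|Lpsi| * `|h| * `|h|.
  rewrite -{1}thE.
  apply: (@seg_bound _ _ HP psi0 dpsi) => // t ht.
    exact: isdiff_fd (HA2a _ (segH t ht)).
  have := HA2b _ _ HP0 (segH t ht) h; rewrite (segnorm _ _ (t0of t ht)) => H1.
  by apply: le_trans H1 _; apply: bnd3.
have T1 : `|dL th et a' - dL theta0 et a' - d2L theta0 et h a'| <= 2 * (`|C3| * `|h|) * `|h|.
  rewrite -{1}thE.
  apply: (@seg_bound _ _ HP (fun y => dL y et a') (fun y u => d2L y et u a')) => // t ht.
    by have [_ rf _] := HA3ii et _ Net (segH t ht); exact: rf_fd rf ra1.
  apply: (@scale_bound _ _ (fun u => d2L (theta0 + t *: h) et u a' - d2L theta0 et u a')).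
    by move=> a u /=; rewrite (d2L_l1 _ _ (segH t ht) Net) (d2L_l1 _ _ HP0 Net) mulrBr.
  move=> u hu /=; apply: le_trans (HA3iii _ _ _ _ u a' HP0 (segH t ht) Net Net (hb u hu)) _.
  by rewrite subrr normr0 addr0 (segnorm _ _ (t0of t ht)) bnd2.
have T2 : `|d2L theta0 et h a' - d2L theta0 eta0 h a'| <= 2 * (`|C3| * `|k|) * `|h|.
  apply: (@scale_bound _ _ (fun u => d2L theta0 et u a' - d2L theta0 eta0 u a')).
    by move=> a u /=; rewrite (d2L_l1 _ _ HP0 Net) (d2L_l1 _ _ HP0 NP0) mulrBr.
  move=> u hu /=; apply: le_trans (HA3iii _ _ _ _ u a' HP0 HP0 NP0 Net (hb u hu)) _.
  by rewrite subrr normr0 add0r ler_wpM2r // real_ler_norm // num_real.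
have T3 : `|dL theta0 et a' - dL theta0 eta0 a'| <= 2 * (`|C4| * `|k|) * `|k|.
  have := @seg_bound _ _ NP (fun e => dL theta0 e a') (fun e g => dEta e g a') eta0 k 0
    (2 * (`|C4| * `|k|) * `|k|).
  rewrite etE subr0; apply => // t ht.
    exact: rf_fd (HA4i _ (segN t ht)) ra1.
  rewrite subr0.
  have -> : dEta (eta0 + t *: k) k a' = dEta (eta0 + t *: k) k a' - dEta eta0 k a'
    by rewrite HA5 subr0.
  apply: (@scale_bound _ _ (fun g => dEta (eta0 + t *: k) g a' - dEta eta0 g a')).
    by move=> a g /=; rewrite (dEta_l _ (segN t ht)) (dEta_l _ NP0) mulrBr.
  move=> u hu /=; apply: le_trans (HA4ii _ u a' (segN t ht) (hbN u hu)) _.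
  by rewrite (segnorm _ _ (t0of t ht)) bnd2.
have U1 : `|dL th et a' - dL th eta0 a' - (dL theta0 et a' - dL theta0 eta0 a')|
    <= 2 * (`|C3| * `|k|) * `|h|.
  have := @seg_bound _ _ HP (fun y => dL y et a' - dL y eta0 a')
    (fun y u => d2L y et u a' - d2L y eta0 u a') theta0 h 0 (2 * (`|C3| * `|k|) * `|h|).
  rewrite thE subr0; apply => // t ht.
    apply: frech_dir_sub.
      by have [_ rf _] := HA3ii et _ Net (segH t ht); exact: rf_fd rf ra1.
    by have [_ rf _] := HA3ii eta0 _ NP0 (segH t ht); exact: rf_fd rf ra1.
  rewrite subr0.
  apply: (@scale_bound _ _ (fun u => d2L (theta0 + t *: h) et u a' - d2L (theta0 + t *: h) eta0 u a')).
    by move=> a u /=; rewrite (d2L_l1 _ _ (segH t ht) Net) (d2L_l1 _ _ (segH t ht) NP0) mulrBr.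
  move=> u hu /=; apply: le_trans (HA3iii _ _ _ _ u a' (segH t ht) (segH t ht) NP0 Net (hb u hu)) _.
  by rewrite subrr normr0 add0r ler_wpM2r // real_ler_norm // num_real.
have mainE : psi0 th - psi0 theta0 - (Rintegral P0 setT (ldot et th alpha) + Bbar (alpha0 - iota alpha) (iota h))
    = (psi0 th - psi0 theta0 - dpsi theta0 h) + 2 * M * (d2L theta0 eta0 h a' - dL th et a').
  have e1 : Bbar (alpha0 - iota alpha) (iota h) = dpsi theta0 h - d2L theta0 eta0 h alpha.
    have -> : alpha0 - iota alpha = (-1) *: iota alpha + alpha0 by rewrite scaleN1r addrC.
    by rewrite HB1 HBi -Hrep Hdp3 d2L_sym mulN1r addrC.
  have e2 : Rintegral P0 setT (ldot et th alpha) = 2 * M * dL th et a'.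
    by rewrite -/(dL th et alpha) {1}aE (lin_scale (dL_l th et Hth Net)).
  have e3 : d2L theta0 eta0 h alpha = 2 * M * d2L theta0 eta0 h a'.
    by rewrite {1}aE (lin_scale (fun a v w => d2L_l2 theta0 eta0 HP0 NP0 a h v w)).
  rewrite e1 e2 e3; ring.
rewrite mainE.
rewrite /K /= (gtr0_norm Mpos).
have x0 : 0 <= `|h| := normr_ge0 _.
have y0 : 0 <= `|k| := normr_ge0 _.
have Wg : `|d2L theta0 eta0 h a' - dL th et a'|
    <= 2 * (`|C3| * `|h|) * `|h| + 2 * (`|C3| * `|k|) * `|h| + 2 * (`|C4| * `|k|) * `|k|.
  have -> : d2L theta0 eta0 h a' - dL th et a' =
    - ((dL th et a' - dL theta0 et a' - d2L theta0 et h a')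
       + (d2L theta0 et h a' - d2L theta0 eta0 h a')
       + (dL theta0 et a' - dL theta0 eta0 a')) by rewrite foc0; ring.
  rewrite normrN; apply: le_trans (ler_normD _ _) _; apply: lerD => //.
  by apply: le_trans (ler_normD _ _) _; apply: lerD.
rewrite /Ilin /Iquad /ind01.
case: asboolP => Hl; case: asboolP => Hq.
- have E10 : psi0 th - psi0 theta0 - dpsi theta0 h = 0.
    rewrite !Hl; have [_ dv] := HA2a _ HP0.
    by rewrite -dv /h linearB /= subrr.
  have [_ _ _ Hd'] := HA3i th eta0 Hth NP0.
  have qd := @quad_deriv _ _ (fun y => L P0 y eta0) theta0 th (dL theta0 eta0) (d2L theta0 eta0)
    (dL th eta0) (dL_l _ _ HP0 NP0) (d2L_f1 _ _ HP0 NP0) d2L_sym Hq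
    (@isdiff_fd _ _ setT _ _ _ (Hd' P0 HPm0)) a'.
  rewrite -/h in qd.
  have Wq : `|d2L theta0 eta0 h a' - dL th et a'|
      <= 2 * (`|C3| * `|k|) * `|h| + 2 * (`|C4| * `|k|) * `|k|.
    have -> : d2L theta0 eta0 h a' - dL th et a' =
      - ((dL th et a' - dL th eta0 a' - (dL theta0 et a' - dL theta0 eta0 a'))
         + (dL theta0 et a' - dL theta0 eta0 a')) by rewrite qd foc0; ring.
    by rewrite normrN; apply: le_trans (ler_normD _ _) _; apply: lerD.
  rewrite E10; apply: final_a => //; by rewrite addr0.
- apply: final_b => //; by rewrite add0r.
- apply: final_b => //; by rewrite addr0.
- apply: final_b => //; by rewrite lerDl ler01.
Qed.
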